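(* For each $n$, let $X_n=(X_n(t))_{t\in\mathbb Z_{\ge0}}$ be a discrete-time Markov chain on a finite state space, irreducible, with transition matrix $P_n$ and (unique) stationary law $\pi_n$, and let $A_n$ be a subset of the state space. Let $T_{A_n}:=\inf\{t\ge0:X_n(t)\in A_n\}$, for $t\ge1$ let $E_t:=\mathbf 1\{X_n(t-1)\notin A_n,\ X_n(t)\in A_n\}$, let $\mu_n:=\mathbb P_{\pi_n}(E_1=1)$, and for $h\ge0$ let $\alpha_n(h):=\sup_x\|P_n^h(x,\cdot)-\pi_n\|_{\mathrm{TV}}$. Let $x_n$ be a sequence of initial states. Assume $\pi_n(A_n)\to0$ and $\mu_n\to0$. Suppose there are integers $b_n,h_n,r_n\to\infty$ such that $h_n=o(b_n)$, $b_n\mu_n\to0$, $\alpha_n(h_n)=o(b_n\mu_n)$, and (M1) with $N_n^{(b)}:=\sum_{t=1}^{b_n}E_t$, one has $\mathbb P_{\pi_n}(N_n^{(b)}\ge1)=b_n\mu_n(1+o(1))$; (M2) $\mathbb P_{x_n}(T_{A_n}\le r_n)=o(1)$, $\|P_n^{r_n}(x_n,\cdot)-\pi_n\|_{\mathrm{TV}}=o(1)$, and $r_n\mu_n=o(1)$. Then $\mu_nT_{A_n}\Rightarrow\mathrm{Exp}(1)$ (convergence in distribution) under $\mathbb P_{x_n}$, as $n\to\infty$.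
   Context: $\mathbb P_\eta$ denotes the law of the chain started from initial distribution $\eta$ (or from a state $x$ for $\mathbb P_x$). $\|\cdot\|_{\mathrm{TV}}$ is total variation distance. $\mathrm{Exp}(1)$ is the exponential distribution with mean 1. *)

(* Defs.v *)
From HB Require Import structures.
From mathcomp Require Import all_boot all_order all_algebra.
From mathcomp Require Import all_classical all_reals all_analysis.
Unset Printing Implicit Defensive.
Import Order.TTheory GRing.Theory Num.Theory.
Local Open Scope ring_scope.

Section FiniteMarkovChain.
Context {R : realType} {S : finType}.

Definition stochastic (P : S -> S -> R) : Prop :=
  (forall x y, 0 <= P x y) /\ (forall x, \sum_(y : S) P x y = 1).

Fixpoint Ppow (P : S -> S -> R) (h : nat) : S -> S -> R :=
  match h with
  | 0 => fun x y => (x == y)%:R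
  | h'.+1 => fun x y => \sum_(z : S) Ppow P h' x z * P z y
  end.

Definition irreducible (P : S -> S -> R) : Prop :=
  forall x y, exists k : nat, 0 < Ppow P k x y.

Definition stationary (P : S -> S -> R) (pi : S -> R) : Prop :=
  [/\ forall x, 0 <= pi x, \sum_(x : S) pi x = 1
    & forall y, \sum_(x : S) pi x * P x y = pi y].

(* point mass at x (initial law for P_x) *)
Definition pt_law (x : S) : S -> R := fun y => (y == x)%:R.

(* law of the trajectory (X(0),...,X(m)) of the chain with initial law eta *)
Definition path_prob (P : S -> S -> R) (eta : S -> R) (m : nat)
  (w : {ffun 'I_m.+1 -> S}) : R :=
  eta (w ord0) * \prod_(i < m) P (w (widen_ord (leqnSn m) i)) (w (lift ord0 i)).

(* P_eta(E) for an event E depending on X(0),...,X(m) *)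
Definition Pr (P : S -> S -> R) (eta : S -> R) (m : nat)
  (E : pred {ffun 'I_m.+1 -> S}) : R :=
  \sum_(w | E w) path_prob P eta m w.

(* E_{i+1} = 1{X(i) \notin A, X(i+1) \in A}, for i : 'I_m *)
Definition entry (A : {set S}) (m : nat) (w : {ffun 'I_m.+1 -> S}) (i : 'I_m) : bool :=
  (w (widen_ord (leqnSn m) i) \notin A) && (w (lift ord0 i) \in A).

Definition mu (P : S -> S -> R) (pi : S -> R) (A : {set S}) : R :=
  Pr P pi 1 [pred w | entry A 1 w ord0].

Definition Npos (A : {set S}) (b : nat) : pred {ffun 'I_b.+1 -> S} :=
  [pred w : {ffun 'I_b.+1 -> S} | [exists i : 'I_b, entry A b w i]].

Definition hit_by (A : {set S}) (m : nat) : pred {ffun 'I_m.+1 -> S} :=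
  [pred w : {ffun 'I_m.+1 -> S} | [exists i : 'I_m.+1, w i \in A]].

(* the event {c * T_A <= t}, observed on the horizon 0..m *)
Definition scaled_hit_le (A : {set S}) (c t : R) (m : nat) : pred {ffun 'I_m.+1 -> S} :=
  [pred w : {ffun 'I_m.+1 -> S} | [exists i : 'I_m.+1, (w i \in A) && (c * (i : nat)%:R <= t)]].

Definition dTV (p q : S -> R) : R :=
  \big[Num.max/0]_(B : {set S}) `|\sum_(y in B) (p y - q y)|.

Definition alpha (P : S -> S -> R) (pi : S -> R) (h : nat) : R :=
  \big[Num.max/0]_(x : S) dTV (Ppow P h x) pi.

End FiniteMarkovChain.

(* Main.v *)
Require Import Defs.
From HB Require Import structures.
From mathcomp Require Import all_boot all_order all_algebra.
From mathcomp Require Import all_classical all_reals all_analysis.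
From mathcomp Require Import lra ring.
Import Order.TTheory GRing.Theory Num.Theory numFieldNormedType.Exports.

Module P1.
Local Open Scope ring_scope.

Section Vec.
Context {R : realType} {S : finType}.
Implicit Types (v : S -> R) (M : S -> S -> R).

Definition vmul v M : S -> R := fun y => \sum_(z : S) v z * M z y.
Fixpoint vpow v M (k : nat) : S -> R :=
  match k with 0 => v | k'.+1 => vmul (vpow v M k') M end.
Definition mass v : R := \sum_(y : S) v y.
Definition kil M (c : S -> S -> bool) : S -> S -> R := fun z y => M z y * (c z y)%:R.
Definition restr (d : pred S) v : S -> R := fun y => v y * (d y)%:R.

Lemma vpow_ext v v' M M' k : (forall y, v y = v' y) -> (forall z y, M z y = M' z y) ->
  forall y, vpow v M k y = vpow v' M' k y.
Proof.
move=> Hv HM; elim: k => [|k IH] y //=.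
by rewrite /vmul; apply: eq_bigr => z _; rewrite IH HM.
Qed.

Definition wt v M m (w : {ffun 'I_m.+1 -> S}) : R :=
  v (w ord0) * \prod_(i < m) M (w (widen_ord (leqnSn m) i)) (w (lift ord0 i)).

Definition snoc m (w : {ffun 'I_m.+1 -> S}) (y : S) : {ffun 'I_m.+2 -> S} :=
  [ffun i : 'I_m.+2 => if (i < m.+1)%N then w (inord i) else y].
Definition unsnoc m (w : {ffun 'I_m.+2 -> S}) : {ffun 'I_m.+1 -> S} * S :=
  ([ffun j : 'I_m.+1 => w (widen_ord (leqnSn m.+1) j)], w ord_max).

Arguments snoc {m}. Arguments unsnoc {m}. Arguments wt v M {m}.

Lemma snoc_bij m : bijective (fun p : {ffun 'I_m.+1 -> S} * S => snoc p.1 p.2).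
Proof.
exists (@unsnoc m).
  move=> [w y]; rewrite /unsnoc /snoc /=; congr pair.
    apply/ffunP => j; rewrite !ffunE /= ltn_ord; congr (w _).
    by apply: val_inj; rewrite /= inordK.
  by rewrite ffunE /= ltnn.
move=> w; apply/ffunP => i; rewrite /unsnoc /snoc /= !ffunE.
case: ifP => Hi.
  by congr (w _); apply: val_inj; rewrite /= inordK.
congr (w _); apply: val_inj => /=.
by have := ltn_ord i; rewrite ltnS leq_eqVlt Hi orbF => /eqP.
Qed.

Lemma snoc_widen m (w : {ffun 'I_m.+1 -> S}) y (j : 'I_m.+1) :
  snoc w y (widen_ord (leqnSn m.+1) j) = w j.
Proof.
by rewrite /snoc ffunE /= ltn_ord; congr (w _); apply: val_inj; rewrite /= inordK.
Qed.

Lemma snoc_max m (w : {ffun 'I_m.+1 -> S}) y : snoc w y ord_max = y.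
Proof. by rewrite /snoc ffunE /= ltnn. Qed.

Lemma wt_snoc v M m (w : {ffun 'I_m.+1 -> S}) y :
  wt v M (snoc w y) = wt v M w * M (w ord_max) y.
Proof.
rewrite /wt big_ord_recr /= -mulrA; congr (_ * _).
  have -> : (ord0 : 'I_m.+2) = widen_ord (leqnSn m.+1) ord0 by apply: val_inj.
  by rewrite snoc_widen.
congr (_ * _).
  apply: eq_bigr => i _.
  have -> : lift ord0 (widen_ord (leqnSn m) i) = widen_ord (leqnSn m.+1) (lift ord0 i)
    by apply: val_inj.
  by rewrite !snoc_widen.
have -> : lift ord0 (ord_max : 'I_m.+1) = (ord_max : 'I_m.+2) by apply: val_inj.
by rewrite snoc_widen snoc_max.
Qed.

Lemma wt_last v M m z :
  \sum_(w : {ffun 'I_m.+1 -> S} | w ord_max == z) wt v M w = vpow v M m z.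
Proof.
elim: m z => [|m IH] z.
  rewrite (reindex (fun y : S => [ffun _ : 'I_1 => y])) /=; last first.
    apply: onW_bij; exists (fun w : {ffun 'I_1 -> S} => w ord0).
      by move=> y; rewrite ffunE.
    by move=> w; apply/ffunP => i; rewrite ffunE (ord1 i).
  rewrite (big_pred1 z); last by move=> y; rewrite /= ffunE.
  by rewrite /wt big_ord0 mulr1 ffunE.
rewrite (reindex (fun p : {ffun 'I_m.+1 -> S} * S => snoc p.1 p.2)) /=;
  last exact/onW_bij/snoc_bij.
under eq_bigl do rewrite snoc_max.
under eq_bigr do rewrite wt_snoc.
rewrite (eq_bigl (fun p : {ffun 'I_m.+1 -> S} * S => predT p.1 && (p.2 == z))) //.
rewrite -(pair_big predT (pred1 z) (fun w y => wt v M w * M (w ord_max) y)) /=.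
under eq_bigr do rewrite (big_pred1 z) //.
rewrite /= /vmul; under [RHS]eq_bigr do rewrite -IH.
rewrite (partition_big (fun w : {ffun 'I_m.+1 -> S} => w ord_max) predT) //=.
rewrite big_mkcond /=; apply: eq_bigr => u _.
rewrite big_distrl /=; apply: eq_bigr => w /eqP ->; done.
Qed.

Lemma prod_bool (m : nat) (B : 'I_m -> bool) :
  \prod_(i < m) ((B i)%:R : R) = ([forall i, B i])%:R.
Proof.
case: (boolP [forall i, B i]) => [/forallP H|/forallPn [i Hi]].
  by rewrite big1 // => i _; rewrite H.
by rewrite (bigD1 i) //= (negbTE Hi) mul0r.
Qed.

Lemma Pr_path (P : S -> S -> R) (eta : S -> R) m (d : pred S) (c : S -> S -> bool) :
  Pr P eta m [pred w : {ffun 'I_m.+1 -> S} | d (w ord0) &&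
     [forall i : 'I_m, c (w (widen_ord (leqnSn m) i)) (w (lift ord0 i))]]
  = mass (vpow (restr d eta) (kil P c) m).
Proof.
rewrite /Pr big_mkcond /mass /=.
rewrite (eq_bigr (fun w => wt (restr d eta) (kil P c) w)); last first.
  move=> w _; rewrite /wt /restr /kil /path_prob big_split /= prod_bool.
  by case: (d _); case: [forall i, _]; rewrite /= ?mulr0 ?mul0r ?mulr1.
rewrite (partition_big (fun w : {ffun 'I_m.+1 -> S} => w ord_max) predT) //=.
by apply: eq_bigr => z _; rewrite wt_last.
Qed.

End Vec.

End P1.
Import P1.

Module P2.
Local Open Scope ring_scope.

Section Gen.
Context {R : realType} {S : finType}.
Implicit Types (v : S -> R) (M : S -> S -> R).

Lemma vpow_add v M j k : vpow v M (j + k) = vpow (vpow v M j) M k.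
Proof. by elim: k => [|k IH]; rewrite ?addn0 // addnS /= IH. Qed.

Lemma vpow_ge0 v M k : (forall y, 0 <= v y) -> (forall z y, 0 <= M z y) ->
  forall y, 0 <= vpow v M k y.
Proof.
move=> Hv HM; elim: k => [|k IH] y //=.
by apply: sumr_ge0 => z _; apply: mulr_ge0.
Qed.

Lemma vpow_le v v' M M' k : (forall y, 0 <= v y) -> (forall y, v y <= v' y) ->
  (forall z y, 0 <= M z y) -> (forall z y, M z y <= M' z y) ->
  forall y, vpow v M k y <= vpow v' M' k y.
Proof.
move=> Hv Hvv HM HMM; elim: k => [|k IH] y //=.
rewrite /vmul; apply: ler_sum => z _.
apply: ler_pM => //; first exact: vpow_ge0.
Qed.

Lemma vpow_lin v M k y : vpow v M k y = \sum_z v z * vpow (pt_law z) M k y.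
Proof.
elim: k y => [|k IH] y /=.
  rewrite (bigD1 y) //= big1 ?addr0 /pt_law ?eqxx ?mulr1 // => z /negbTE Hz.
  by rewrite eq_sym Hz mulr0.
rewrite /vmul (eq_bigr (fun u => \sum_z v z * vpow (pt_law z) M k u * M u y)); last first.
  by move=> u _; rewrite IH big_distrl.
rewrite exchange_big /=; apply: eq_bigr => z _.
by rewrite big_distrr /=; apply: eq_bigr => u _; rewrite mulrA.
Qed.

Lemma mass_lin v M k : mass (vpow v M k) = \sum_z v z * mass (vpow (pt_law z) M k).
Proof.
rewrite /mass; under eq_bigr do rewrite vpow_lin.
rewrite exchange_big /=; apply: eq_bigr => z _; by rewrite big_distrr.
Qed.

Lemma mass_vmul_le v M : (forall y, 0 <= v y) -> (forall z y, 0 <= M z y) ->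
  (forall z, \sum_y M z y <= 1) -> mass (vmul v M) <= mass v.
Proof.
move=> Hv HM HM1; rewrite /mass /vmul exchange_big /=.
apply: ler_sum => z _; rewrite -big_distrr /=.
rewrite -[leRHS]mulr1; apply: ler_pM => //; exact: sumr_ge0.
Qed.

Lemma mass_vmul_eq v M : (forall z, \sum_y M z y = 1) -> mass (vmul v M) = mass v.
Proof.
move=> HM1; rewrite /mass /vmul exchange_big /=.
by apply: eq_bigr => z _; rewrite -big_distrr /= HM1 mulr1.
Qed.

Lemma mass_vpow_le v M k : (forall y, 0 <= v y) -> (forall z y, 0 <= M z y) ->
  (forall z, \sum_y M z y <= 1) -> mass (vpow v M k) <= mass v.
Proof.
move=> Hv HM HM1; elim: k => [|k IH] //=.
apply: le_trans IH; apply: mass_vmul_le => //; exact: vpow_ge0.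
Qed.

Lemma mass_vpow_ge0 v M k : (forall y, 0 <= v y) -> (forall z y, 0 <= M z y) ->
  0 <= mass (vpow v M k).
Proof. by move=> Hv HM; apply: sumr_ge0 => y _; apply: vpow_ge0. Qed.

Lemma mass_vpow_eq v M k : (forall z, \sum_y M z y = 1) -> mass (vpow v M k) = mass v.
Proof. by move=> HM1; elim: k => [|k IH] //=; rewrite mass_vmul_eq. Qed.

Lemma Ppow_vpow (P : S -> S -> R) h x y : Ppow P h x y = vpow (pt_law x) P h y.
Proof.
elim: h y => [|h IH] y /=; first by rewrite /pt_law eq_sym.
by rewrite /vmul; apply: eq_bigr => z _; rewrite IH.
Qed.

Lemma sum_pos_part (g f : S -> R) : (forall z, 0 <= f z <= 1) ->
  \sum_z g z * f z <= \sum_(z in [set z | 0 < g z]) g z.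
Proof.
move=> Hf.
rewrite (bigID (fun z => z \in [set z | 0 < g z])) /=.
rewrite -[leRHS]addr0; apply: lerD.
  apply: ler_sum => z; rewrite inE => Hz.
  have /andP[_ H1] := Hf z.
  by rewrite -[leRHS]mulr1; apply: ler_wpM2l => //; apply: ltW.
apply: sumr_le0 => z; rewrite inE -leNgt => Hz.
have /andP[H0 _] := Hf z.
by rewrite mulr_le0_ge0.
Qed.

Lemma dTV_ge (u v : S -> R) (B : {set S}) : `|\sum_(y in B) (u y - v y)| <= dTV u v.
Proof. by rewrite /dTV; exact: (le_bigmax 0 (fun B : {set S} => `|\sum_(y in B) (u y - v y)|) B). Qed.

Lemma dTV_ge0 (u v : S -> R) : 0 <= dTV u v.
Proof. apply: (le_trans (normr_ge0 (\sum_(y in finset.set0) (u y - v y)))); exact: dTV_ge. Qed.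

Lemma dTV_f (u v f : S -> R) : (forall z, 0 <= f z <= 1) ->
  `|\sum_z u z * f z - \sum_z v z * f z| <= dTV u v.
Proof.
move=> Hf.
have E : \sum_z u z * f z - \sum_z v z * f z = \sum_z (u z - v z) * f z.
  by rewrite -sumrB; apply: eq_bigr => z _; rewrite mulrBl.
rewrite E ler_norml; apply/andP; split.
  rewrite lerNl -sumrN.
  under eq_bigr do rewrite -mulNr.
  apply: le_trans (sum_pos_part _ _ Hf) _.
  apply: le_trans (dTV_ge u v [set z | 0 < - (u z - v z)]).
  by rewrite sumrN -normrN ler_norm.
apply: le_trans (sum_pos_part _ _ Hf) _.
apply: le_trans (dTV_ge u v [set z | 0 < u z - v z]).
by rewrite ler_norm.
Qed.

Lemma alpha_ge (P : S -> S -> R) (pi : S -> R) h x : dTV (Ppow P h x) pi <= alpha P pi h.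
Proof. by rewrite /alpha; exact: (le_bigmax 0 (fun x => dTV (Ppow P h x) pi) x). Qed.

Lemma alpha_ge0 (P : S -> S -> R) (pi : S -> R) h : 0 <= alpha P pi h.
Proof.
rewrite /alpha; elim/big_ind: _ => //; last by move=> x _; exact: dTV_ge0.
by move=> a c Ha Hc; rewrite le_max Ha.
Qed.

End Gen.

End P2.
Import P2.

Module P3.
Local Open Scope ring_scope.

Section Gen2.
Context {R : realType} {S : finType}.

Lemma sum_diff_f (u u' f : S -> R) : (forall z, u' z <= u z) -> (forall z, 0 <= f z <= 1) ->
  0 <= \sum_z u z * f z - \sum_z u' z * f z <= \sum_z u z - \sum_z u' z.
Proof.
move=> Hu Hf; rewrite -!sumrB; apply/andP; split.
  apply: sumr_ge0 => z _; rewrite -mulrBl; apply: mulr_ge0; first by rewrite subr_ge0.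
  by case/andP: (Hf z).
apply: ler_sum => z _; rewrite -mulrBl -[leRHS]mulr1; apply: ler_wpM2l.
  by rewrite subr_ge0.
by case/andP: (Hf z).
Qed.

Lemma Pr_compl (P : S -> S -> R) eta m (E : pred {ffun 'I_m.+1 -> S}) :
  stochastic P -> Pr P eta m E = mass eta - Pr P eta m (predC E).
Proof.
move=> [HP0 HP1].
have T : \sum_w path_prob P eta m w = mass eta.
  have := Pr_path P eta m predT (fun _ _ => true).
  rewrite /Pr (eq_bigl predT); last first.
    by move=> w; rewrite /= ; apply/forallP.
  move=> ->; rewrite -(mass_vpow_eq eta P m HP1) /mass.
  apply: eq_bigr => y _; apply: vpow_ext => [z|z t]; by rewrite /restr /kil mulr1.
rewrite -T (bigID E) /= /Pr addrK.
done.
Qed.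

End Gen2.

Section Chain.
Context {R : realType} {S : finType} (P : S -> S -> R) (pi : S -> R) (A : {set S}).
Hypothesis HP : stochastic P.
Hypothesis Hpi : stationary P pi.

Definition noent (z y : S) : bool := ~~ ((z \notin A) && (y \in A)).
Definition K := kil P noent.
Definition L := kil P (fun _ y => y \notin A).
Definition F k := mass (vpow pi K k).
Definition fk k z := mass (vpow (pt_law z) K k).
Definition muc := mu P pi A.

Lemma P_ge0 z y : 0 <= P z y. Proof. by case: HP. Qed.
Lemma P_sum z : \sum_y P z y = 1. Proof. by case: HP. Qed.
Lemma kil_ge0 c z y : 0 <= kil P c z y.
Proof. by rewrite /kil mulr_ge0 ?P_ge0. Qed.
Lemma kil_le c z y : kil P c z y <= P z y.
Proof. by rewrite /kil; case: (c z y); rewrite ?mulr1 ?mulr0 ?P_ge0. Qed.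
Lemma kil_sum c z : \sum_y kil P c z y <= 1.
Proof. by rewrite -(P_sum z); apply: ler_sum => y _; apply: kil_le. Qed.
Lemma pi_nonneg y : 0 <= pi y. Proof. by case: Hpi. Qed.
Lemma mass_pi : mass pi = 1. Proof. by case: Hpi. Qed.
Lemma pt_ge0 (x y : S) : 0 <= (pt_law x y : R). Proof. by rewrite /pt_law ler0n. Qed.
Lemma mass_pt (x : S) : mass (pt_law x) = 1 :> R.
Proof.
rewrite /mass (bigD1 x) //= big1 ?addr0 /pt_law ?eqxx // => y /negbTE ->; done.
Qed.

Lemma fk_bnd k z : 0 <= fk k z <= 1.
Proof.
apply/andP; split; first by apply: mass_vpow_ge0 => [y|a c]; [exact: pt_ge0| exact: kil_ge0].
rewrite -(mass_pt z); apply: mass_vpow_le; [exact: pt_ge0|exact: kil_ge0|exact: kil_sum].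
Qed.

Lemma F_lin k : F k = \sum_z pi z * fk k z.
Proof. exact: mass_lin. Qed.

Lemma pi_stat k y : vpow pi P k y = pi y.
Proof.
elim: k y => [|k IH] y //=; rewrite /vmul.
case: Hpi => _ _ <-; apply: eq_bigr => z _; by rewrite IH.
Qed.

Lemma vK_le_pi k y : vpow pi K k y <= pi y.
Proof.
rewrite -(pi_stat k y); apply: vpow_le => //; [exact: pi_nonneg|exact: kil_ge0|exact: kil_le].
Qed.

Lemma vK_ge0 v k y : (forall y, 0 <= v y) -> 0 <= vpow v K k y.
Proof. by move=> Hv; apply: vpow_ge0 => //; exact: kil_ge0. Qed.

Lemma F0 : F 0 = 1. Proof. exact: mass_pi. Qed.

Lemma F_ge0 k : 0 <= F k.
Proof. by apply: mass_vpow_ge0; [exact: pi_nonneg|exact: kil_ge0]. Qed.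

Lemma F_mono m m' : (m <= m')%N -> F m' <= F m.
Proof.
move=> Hm; rewrite /F -(subnKC Hm) vpow_add.
apply: mass_vpow_le; [|exact: kil_ge0|exact: kil_sum].
by move=> y; apply: vK_ge0; exact: pi_nonneg.
Qed.

Lemma F_le1 k : F k <= 1.
Proof. by rewrite -F0; apply: F_mono. Qed.

Lemma Pr_Npos b : Pr P pi b (Npos A b) = 1 - F b.
Proof.
rewrite Pr_compl // mass_pi; congr (_ - _).
transitivity (mass (vpow (restr predT pi) (kil P noent) b)); last first.
  by rewrite /mass; apply: eq_bigr => y _; apply: vpow_ext => // z; rewrite /restr mulr1.
rewrite -Pr_path /Pr; apply: eq_bigl => w /=.
rewrite negb_exists; apply: eq_forallb => i.
by rewrite /entry /noent.
Qed.

Lemma mu_F1 : muc = 1 - F 1.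
Proof.
rewrite /muc /mu -Pr_Npos /Pr; apply: eq_bigl => w /=.
apply/idP/existsP => [H|[i]]; first by exists ord0.
by rewrite (ord1 i).
Qed.

Lemma mass_step v : (forall y, 0 <= v y <= pi y) -> mass v - mass (vmul v K) <= muc.
Proof.
move=> Hv.
have E u : mass u - mass (vmul u K) = \sum_z u z * (1 - \sum_y K z y).
  rewrite /mass /vmul exchange_big /= -sumrB; apply: eq_bigr => z _.
  by rewrite mulrBr mulr1 big_distrr.
rewrite E mu_F1 -[X in X - F 1]F0 /F /= E; apply: ler_sum => z _.
apply: ler_wpM2r; first by rewrite subr_ge0 kil_sum.
by case/andP: (Hv z).
Qed.

Lemma F_diff k j : F k - F (k + j) <= j%:R * muc.
Proof.
elim: j => [|j IH]; first by rewrite addn0 subrr mul0r.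
have H1 : F (k + j) - F (k + j.+1) <= muc.
  rewrite /F addnS /=; apply: mass_step => y.
  by rewrite vK_ge0 ?vK_le_pi //; exact: pi_nonneg.
have -> : F k - F (k + j.+1) = (F k - F (k + j)) + (F (k + j) - F (k + j.+1)).
  by rewrite addrA subrK.
by rewrite mulrSr mulrDl mul1r; apply: lerD.
Qed.

Lemma vpowP_mass v h : mass (vpow v P h) = mass v.
Proof. by apply: mass_vpow_eq; exact: P_sum. Qed.

Lemma mix_bound v m h : (forall y, 0 <= v y) ->
  `|mass (vpow (vpow v P h) K m) - mass v * F m| <= mass v * alpha P pi h.
Proof.
move=> Hv.
have E1 : mass (vpow (vpow v P h) K m) =
    \sum_w v w * \sum_z Ppow P h w z * fk m z.
  rewrite mass_lin; under eq_bigr do rewrite vpow_lin big_distrl /=.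
  rewrite exchange_big /=; apply: eq_bigr => w _; rewrite big_distrr /=.
  by apply: eq_bigr => z _; rewrite Ppow_vpow mulrA.
rewrite E1 /mass big_distrl /= -sumrB big_distrl /=.
apply: le_trans (ler_norm_sum _ _ _) _; apply: ler_sum => w _.
rewrite -mulrBr normrM (ger0_norm (Hv w)); apply: ler_wpM2l => //.
rewrite F_lin; apply: le_trans (alpha_ge P pi h w).
by apply: dTV_f; exact: fk_bnd.
Qed.

Lemma block_upper n j h : (h <= j)%N -> F (n + j) <= F n * (F (j - h) + alpha P pi h).
Proof.
move=> Hhj; set v := vpow pi K n.
have Hv y : 0 <= v y by apply: vK_ge0; exact: pi_nonneg.
have -> : F (n + j) = mass (vpow (vpow v K h) K (j - h)).
  have E : vpow v K j = vpow (vpow v K h) K (j - h) by rewrite -vpow_add subnKC.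
  by rewrite /F vpow_add -/v E.
apply: (@le_trans _ _ (mass (vpow (vpow v P h) K (j - h)))).
  apply: ler_sum => y _; apply: vpow_le; last by move=> *; exact: lexx.
  - by move=> z; apply: vK_ge0.
  - by move=> z; apply: vpow_le => //; [exact: kil_ge0|exact: kil_le].
  - exact: kil_ge0.
have := mix_bound v (j - h) h Hv; rewrite ler_norml => /andP[_].
by rewrite lerBlDl -mulrDr.
Qed.

Lemma block_lower n j h : (h <= j)%N ->
  F n * (F (j - h) - alpha P pi h) - h%:R * muc <= F (n + j).
Proof.
move=> Hhj; set v := vpow pi K n.
have Hv y : 0 <= v y by apply: vK_ge0; exact: pi_nonneg.
have -> : F (n + j) = mass (vpow (vpow v K h) K (j - h)).
  have E : vpow v K j = vpow (vpow v K h) K (j - h) by rewrite -vpow_add subnKC.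
  by rewrite /F vpow_add -/v E.
have H1 := mix_bound v (j - h) h Hv; rewrite ler_norml in H1; case/andP: H1 => H1 _.
rewrite lerBrDl in H1.
have H2 : mass (vpow (vpow v P h) K (j - h)) - mass (vpow (vpow v K h) K (j - h))
          <= h%:R * muc.
  rewrite !mass_lin.
  have := sum_diff_f (vpow v P h) (vpow v K h) (fk (j - h)).
  case/(_ _ _)/andP => //; first by move=> z; apply: vpow_le => //;
    [exact: kil_ge0|exact: kil_le].
    exact: fk_bnd.
  move=> _ H; apply: le_trans H _.
  rewrite -/(mass _) -/(mass _) vpowP_mass /v /F -vpow_add.
  exact: F_diff.
have Ev : mass v = F n by [].
rewrite Ev in H1; rewrite mulrBr; lra.
Qed.

End Chain.

End P3.
Import P3.

Module P4.
Local Open Scope ring_scope.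

Section Chain2.
Context {R : realType} {S : finType} (P : S -> S -> R) (pi : S -> R) (A : {set S}).
Hypothesis HP : stochastic P.
Hypothesis Hpi : stationary P pi.
Variable x : S.

Let K := K P A.
Let L := L P A.
Let F := F P pi A.
Let muc := muc P pi A.

Definition u0 : S -> R := restr (fun y => y \notin A) (pt_law x).
Definition G m := mass (vpow u0 L m).

Lemma u0_ge0 y : 0 <= u0 y.
Proof. by rewrite /u0 /restr mulr_ge0 ?ler0n // pt_ge0. Qed.
Lemma u0_le y : u0 y <= pt_law x y.
Proof. by rewrite /u0 /restr; case: (_ \notin _); rewrite ?mulr1 ?mulr0 ?pt_ge0. Qed.

Lemma L_ge0 z y : 0 <= L z y. Proof. exact: kil_ge0. Qed.
Lemma K_ge0 z y : 0 <= K z y. Proof. exact: kil_ge0. Qed.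

Lemma Pr_hit m : Pr P (pt_law x) m (hit_by A m) = 1 - G m.
Proof.
rewrite Pr_compl // mass_pt; congr (_ - _).
rewrite /G /u0 /L -Pr_path /Pr; apply: eq_bigl => w /=.
rewrite negb_exists; apply/forallP/andP => [H|[H0 /forallP H] i].
  by split; [exact: H ord0 | apply/forallP => i; exact: H _].
by case: (unliftP ord0 i) => [j ->|->]; [exact: H j | exact: H0].
Qed.

Lemma G_mono m m' : (m <= m')%N -> G m' <= G m.
Proof.
move=> Hm; rewrite /G -(subnKC Hm) vpow_add.
apply: mass_vpow_le; [|exact: kil_ge0|exact: kil_sum].
by move=> y; apply: vpow_ge0; [exact: u0_ge0|exact: L_ge0].
Qed.

Lemma G_le1 m : G m <= 1.
Proof.
apply: (le_trans (G_mono _ _ (leq0n m))); rewrite /G /= -(mass_pt x).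
by apply: ler_sum => y _; apply: u0_le.
Qed.

Lemma G_ge0 m : 0 <= G m.
Proof. by apply: mass_vpow_ge0; [exact: u0_ge0|exact: L_ge0]. Qed.

Lemma supp_KL v k : (forall y, y \in A -> v y = 0) ->
  (forall y, vpow v K k y = vpow v L k y) /\ (forall y, y \in A -> vpow v L k y = 0).
Proof.
move=> Hv; elim: k => [|k [IH1 IH2]] //=; split => y.
  rewrite /vmul; apply: eq_bigr => z _; rewrite IH1.
  case: (boolP (z \in A)) => Hz; first by rewrite IH2 // !mul0r.
  by rewrite /K /L /P3.K /P3.L /kil /noent Hz.
move=> Hy; rewrite /vmul big1 // => z _.
by rewrite /L /P3.L /kil Hy /= mulr0 mulr0.
Qed.

Lemma F_s_lb s : 1 - s%:R * muc <= F s.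
Proof.
have H := F_diff P pi A HP Hpi 0 s; rewrite add0n (F0 P pi A Hpi) in H.
rewrite /F /muc; lra.
Qed.

Lemma G_F r s :
  `|G s - F s| <= (1 - G r) + dTV (Ppow P r x) pi + r%:R * muc.
Proof.
have Hd := dTV_ge0 (Ppow P r x) pi.
have Hmu : 0 <= muc.
  have H1 := F_diff P pi A HP Hpi 0 1; have H2 := F_mono P pi A HP Hpi _ _ (leq0n 1).
  rewrite mul1r in H1; rewrite /muc; lra.
case: (leqP r s) => Hrs; last first.
  have H1 := G_mono _ _ (ltnW Hrs). have H2 := G_le1 s.
  have H3 := F_s_lb s. have H4 := F_le1 P pi A HP Hpi s.
  have H5 : s%:R * muc <= r%:R * muc by apply: ler_wpM2r => //; rewrite ler_nat ltnW.
  rewrite /F in H3 H4 *.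
  rewrite ler_norml; apply/andP; split; lra.
set Mx := mass (vpow (vpow (pt_law x) P r) K (s - r)).
have Ha : `|Mx - F (s - r)| <= dTV (Ppow P r x) pi.
  rewrite /Mx /F /P3.F !mass_lin.
  under eq_bigr do rewrite vpow_lin.
  rewrite (eq_bigr (fun z => Ppow P r x z * fk P A (s - r) z)); last first.
    by move=> z _; rewrite Ppow_vpow -vpow_lin.
  apply: dTV_f => z; exact: fk_bnd.
have EG : G s = mass (vpow (vpow u0 L r) K (s - r)).
  rewrite /G -(subnKC Hrs) vpow_add subnKC //.
  have Hu0 : forall y, y \in A -> u0 y = 0 by move=> y Hy; rewrite /u0 /restr Hy mulr0.
  have [E1 _] := supp_KL (vpow u0 L r) (s - r) (proj2 (supp_KL u0 r Hu0)).
  by rewrite /mass; apply: eq_bigr => y _; rewrite E1.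
have Hb : 0 <= Mx - G s <= 1 - G r.
  rewrite EG /Mx !mass_lin.
  have := sum_diff_f (vpow (pt_law x) P r) (vpow u0 L r) (fk P A (s - r)).
  case/(_ _ _)/andP => //.
  - move=> z; apply: vpow_le; [exact: u0_ge0|exact: u0_le|exact: L_ge0|].
    exact: kil_le.
  - by move=> z; exact: fk_bnd.
  move=> H0 H1; rewrite H0 /=; apply: le_trans H1 _.
  rewrite -/(mass _) -/(mass _) vpowP_mass // mass_pt //.
have Hc : 0 <= F (s - r) - F s <= r%:R * muc.
  have := F_diff P pi A HP Hpi (s - r) r; rewrite subnK //.
  have := F_mono P pi A HP Hpi _ _ (leq_subr r s).
  rewrite /F /muc; move=> X Y; apply/andP; split; lra.
move: Ha Hb Hc; rewrite ler_norml => /andP[Ha1 Ha2] /andP[Hb1 Hb2] /andP[Hc1 Hc2].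
rewrite ler_norml; apply/andP; split; lra.
Qed.

End Chain2.

End P4.
Import P4.

Module P5.
Local Open Scope ring_scope.

Section Chain3.
Context {R : realType} {S : finType} (P : S -> S -> R) (pi : S -> R) (A : {set S}).
Hypothesis HP : stochastic P.
Hypothesis Hpi : stationary P pi.

Let F := F P pi A.
Let muc := muc P pi A.

Lemma muc_ge0 : 0 <= muc.
Proof.
have H1 := F_diff P pi A HP Hpi 0 1; have H2 := F_mono P pi A HP Hpi _ _ (leq0n 1).
rewrite mul1r in H1; rewrite /muc; lra.
Qed.

Lemma F_kb_upper b h k : (h <= b)%N ->
  F (k * b) <= (F (b - h) + alpha P pi h) ^+ k.
Proof.
move=> Hhb; elim: k => [|k IH]; first by rewrite mul0n expr0 /F (F0 P pi A Hpi).
rewrite mulSnr exprSr /F.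
apply: le_trans (block_upper P pi A HP Hpi (k * b) b h Hhb) _.
apply: ler_wpM2r => //.
by rewrite addr_ge0 ?alpha_ge0 ?F_ge0.
Qed.

Lemma F_kb_lower b h k : (h <= b)%N -> 0 <= F (b - h) - alpha P pi h ->
  (F (b - h) - alpha P pi h) ^+ k - k%:R * (h%:R * muc) <= F (k * b).
Proof.
move=> Hhb Hc; set c := F (b - h) - alpha P pi h.
have Hc1 : c <= 1.
  have := F_le1 P pi A HP Hpi (b - h); have := alpha_ge0 P pi h; rewrite /c /F; lra.
have Hhm : 0 <= h%:R * muc by rewrite mulr_ge0 ?muc_ge0.
elim: k => [|k IH]; first by rewrite mul0n expr0 mul0r subr0 /F (F0 P pi A Hpi).
rewrite mulSnr exprSr.
have H1 := block_lower P pi A HP Hpi (k * b) b h Hhb; rewrite -/c -/F in H1.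
have H2 : ((c ^+ k) - k%:R * (h%:R * muc)) * c <= F (k * b) * c by apply: ler_wpM2r.
have H3 : (k%:R * (h%:R * muc)) * c <= k%:R * (h%:R * muc).
  by rewrite -[leRHS]mulr1; apply: ler_wpM2l => //; rewrite mulr_ge0.
rewrite mulrSr mulrDl mul1r.
rewrite mulrBl in H2; rewrite /F /muc in H1 H2 H3 *. lra.
Qed.

Lemma muc_gt0 : irreducible P -> A != finset.set0 -> \sum_(y in A) pi y < 1 -> 0 < muc.
Proof.
move=> Hirr HA Hpa.
have HP0 := P_ge0 P HP.
have Hpi0 := pi_nonneg P pi Hpi.
pose ent z := \sum_y (P z y - P3.K P A z y).
have Hent z y : 0 <= P z y - P3.K P A z y by rewrite subr_ge0; exact: kil_le.
have Emu : muc = \sum_z pi z * ent z.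
  rewrite /muc (mu_F1 P pi A HP Hpi) /P3.F /= -(mass_pi P pi Hpi) /mass /vmul.
  rewrite exchange_big /= -sumrB; apply: eq_bigr => z _.
  rewrite /ent sumrB (P_sum P HP) mulrBr mulr1 big_distrr //.
rewrite lt_def muc_ge0 andbT; apply/eqP => Hm0.
have Hz0 z : pi z * ent z = 0.
  apply: (psumr_eq0P (P := predT) (F := fun z => pi z * ent z)) => //.
    by move=> u _; apply: mulr_ge0 => //; apply: sumr_ge0 => y _.
  by rewrite -Emu Hm0.
pose B z := (z \notin A) && (0 < pi z).
have Hstep u y : B u -> 0 < P u y -> B y.
  case/andP => HuA Hu Hpuy.
  have Hent0 : ent u = 0.
    by have := Hz0 u; move/eqP; rewrite mulf_eq0 (gt_eqF Hu) /= => /eqP.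
  have HyA : y \notin A.
    apply/negP => HyA.
    have := psumr_eq0P (P := predT) (F := fun y => P u y - P3.K P A u y) (fun y _ => Hent u y) Hent0 (i := y) isT.
    rewrite /K /kil /noent HuA HyA /= mulr0 subr0 => E.
    by move: Hpuy; rewrite E ltxx.
  rewrite /B HyA /=.
  case: Hpi => _ _ /(_ y) <-.
  apply: (lt_le_trans (y := pi u * P u y)); first exact: mulr_gt0.
  rewrite (bigD1 u) //= lerDl; apply: sumr_ge0 => v _; exact: mulr_ge0.
have Hclos k z y : B z -> 0 < Ppow P k z y -> B y.
  elim: k y => [|k IH] y Bz /=.
    by rewrite lt0r pnatr_eq0 eqb0 negbK => /andP[/eqP <-].
  move=> Hs.
  have [u Hu] : exists u, 0 < Ppow P k z u * P u y.
    have [//|Hn] := pselect (exists u, 0 < Ppow P k z u * P u y).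
    exfalso; move: Hs; apply/negP; rewrite -leNgt.
    apply: sumr_le0 => u _; rewrite leNgt; apply/negP => Hu; apply: Hn; by exists u.
  have Hpp : 0 <= Ppow P k z u by rewrite Ppow_vpow; apply: vpow_ge0 => //; exact: pt_ge0.
  have Hpuy : 0 < P u y.
    rewrite lt_def HP0 andbT; apply/negP => /eqP E; move: Hu; by rewrite E mulr0 ltxx.
  have Hpzu : 0 < Ppow P k z u.
    rewrite lt_def Hpp andbT; apply/negP => /eqP E; move: Hu; by rewrite E mul0r ltxx.
  exact: Hstep (IH u Bz Hpzu) Hpuy.
have [z Bz] : exists z, B z.
  have [//|Hn] := pselect (exists z, B z).
  exfalso; move: Hpa; apply/negP; rewrite -leNgt.
  rewrite -(mass_pi P pi Hpi) /mass (bigID (fun y => y \in A)) /= -[leRHS]addr0 lerD //.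
  apply: sumr_le0 => y HyA; rewrite leNgt; apply/negP => Hy; apply: Hn; exists y.
  by rewrite /B HyA.
case/set0Pn: HA => a Ha.
have [k Hk] := Hirr z a.
by have := Hclos k z a Bz Hk; rewrite /B Ha.
Qed.

End Chain3.

End P5.
Import P5.

Module P6.
Local Open Scope classical_set_scope.
Local Open Scope ring_scope.

Section Lim.
Context {R : realType}.

Lemma cvg_expRN (g : nat -> R) l : g @ \oo --> l -> (fun n => expR (- g n)) @ \oo --> expR (- l).
Proof.
move=> Hg.
have H : (fun n => - g n) @ \oo --> - l by apply: cvgN.
exact: (continuous_cvg _ (@continuous_expR R (- l)) H).
Qed.

Lemma pow_exp_lim (c : nat -> R) (k : nat -> nat) (t : R) :
  c @ \oo --> 0 -> (fun n => (k n)%:R * c n) @ \oo --> t ->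
  (fun n => (1 - c n) ^+ k n) @ \oo --> expR (- t).
Proof.
move=> Hc Hkc.
have Hlt : \forall n \near \oo, c n < 1.
  move/cvgrPdist_lt: Hc => /(_ 1 ltr01); apply: filterS => n.
  by rewrite sub0r normrN => /(le_lt_trans (ler_norm _)).
have Hf : (fun n => expR (- ((k n)%:R * c n * (1 - c n)^-1))) @ \oo --> expR (- t).
  have H1c : (fun n => 1 - c n) @ \oo --> (1:R).
    have := cvgB (cvg_cst (1:R)) Hc; rewrite subr0 => H; exact: H.
  have := cvgM Hkc (cvgV (oner_neq0 R) H1c); rewrite invr1 mulr1 => H.
  by apply: cvg_expRN; exact: H.
have Hh : (fun n => expR (- ((k n)%:R * c n))) @ \oo --> expR (- t) by apply: cvg_expRN.
apply: (squeeze_cvgr _ Hf Hh); near=> n.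
have Hcn : c n < 1 by near: n.
have H1 : 0 < 1 - c n by rewrite subr_gt0.
apply/andP; split.
  rewrite -mulrA -mulrN expRM_natl.
  apply: lerXn2r; [by rewrite nnegrE expR_ge0|by rewrite nnegrE ltW|].
  rewrite expRN -[leRHS]invrK lef_pV2 ?posrE ?expR_gt0 ?invr_gt0 //.
  apply: le_trans (expR_ge1Dx _).
  have -> : 1 + c n / (1 - c n) = (1 - c n)^-1.
    by field; rewrite subr_eq0; apply/eqP => E; move: Hcn; rewrite -E ltxx.
  done.
rewrite -mulrN expRM_natl.
apply: lerXn2r; [by rewrite nnegrE ltW|by rewrite nnegrE expR_ge0|].
by have := expR_ge1Dx (- c n); rewrite addrC.
Unshelve. all: by end_near.
Qed.


Lemma cvg_near_eq (f g : nat -> R) (l : R) :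
  (\forall n \near \oo, f n = g n) -> g @ \oo --> l -> f @ \oo --> l.
Proof.
move=> E Hg; apply: (squeeze_cvgr _ Hg Hg); near=> n.
have -> : f n = g n by near: n.
by rewrite lexx.
Unshelve. all: by end_near.
Qed.

Lemma cvg_ratio0 (a b : nat -> R) :
  (\forall n \near \oo, 0 < b n) -> (\forall n \near \oo, 0 <= a n) ->
  (forall eps : R, 0 < eps -> \forall n \near \oo, a n <= eps * b n) ->
  (fun n => a n / b n) @ \oo --> (0:R).
Proof.
move=> Hb Ha He; apply/cvgrPdist_le => eps Heps.
have He' := He (eps / 2) (divr_gt0 Heps (ltr0Sn R 1)).
near=> n.
have Hbn : 0 < b n by near: n.
have Han : 0 <= a n by near: n.
have Hen : a n <= eps / 2 * b n by near: n.
rewrite sub0r normrN ger0_norm; last by apply: divr_ge0 => //; apply: ltW.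
rewrite -ler_pdivrMr // in Hen; apply: le_trans Hen _.
lra.
Unshelve. all: by end_near.
Qed.


Lemma block_analytic (t : R) (Fs q al be de hb hm : nat -> R) (k : nat -> nat) :
  be @ \oo --> 0 -> (\forall n \near \oo, 0 < be n) ->
  (fun n => (k n)%:R * be n) @ \oo --> t ->
  de @ \oo --> 0 -> hb @ \oo --> 0 ->
  (\forall n \near \oo, hm n = be n * hb n) ->
  (\forall n \near \oo, 0 <= al n) ->
  (forall eps : R, 0 < eps -> \forall n \near \oo, al n <= eps * be n) ->
  (\forall n \near \oo, be n * (1 + de n) - hm n <= 1 - q n <= be n * (1 + de n)) ->
  (\forall n \near \oo, Fs n <= (q n + al n) ^+ k n) ->
  (\forall n \near \oo, 0 <= q n - al n ->
      (q n - al n) ^+ (k n).+1 - (k n).+1%:R * hm n <= Fs n) ->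
  Fs @ \oo --> expR (- t).
Proof.
move=> Hbe Hbe0 Hkbe Hde Hhb Hhm Hal0 Heps Hq HU HL.
have Hab := cvg_ratio0 al be Hbe0 Hal0 Heps.
have Hc1 : (fun _ : nat => (1:R)) @ \oo --> (1:R) by exact: cvg_cst.
have HrU : (fun n => (1 - q n - al n) / be n) @ \oo --> (1:R).
  have Hlo : (fun n => 1 + de n - hb n - al n / be n) @ \oo --> (1:R).
    have := cvgB (cvgB (cvgD Hc1 Hde) Hhb) Hab; rewrite !subr0 addr0 => H; exact: H.
  have Hhi : (fun n => 1 + de n) @ \oo --> (1:R).
    have := cvgD Hc1 Hde; rewrite addr0 => H; exact: H.
  apply: (squeeze_cvgr _ Hlo Hhi); near=> n.
  have Hb : 0 < be n by near: n.
  have Ha : 0 <= al n by near: n.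
  have Hm : hm n = be n * hb n by near: n.
  have /andP[Hq1 Hq2] : be n * (1 + de n) - hm n <= 1 - q n <= be n * (1 + de n) by near: n.
  apply/andP; split.
    rewrite ler_pdivlMr //.
    have -> : (1 + de n - hb n - al n / be n) * be n = be n * (1 + de n) - be n * hb n - al n.
      by field; rewrite gt_eqF.
    lra.
  rewrite ler_pdivrMr //.
  have -> : (1 + de n) * be n = be n * (1 + de n) by rewrite mulrC.
  lra.
have HrL : (fun n => (1 - q n + al n) / be n) @ \oo --> (1:R).
  have Hlo : (fun n => 1 + de n - hb n) @ \oo --> (1:R).
    have := cvgB (cvgD Hc1 Hde) Hhb; rewrite !subr0 addr0 => H; exact: H.
  have Hhi : (fun n => 1 + de n + al n / be n) @ \oo --> (1:R).
    have := cvgD (cvgD Hc1 Hde) Hab; rewrite !addr0 => H; exact: H.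
  apply: (squeeze_cvgr _ Hlo Hhi); near=> n.
  have Hb : 0 < be n by near: n.
  have Ha : 0 <= al n by near: n.
  have Hm : hm n = be n * hb n by near: n.
  have /andP[Hq1 Hq2] : be n * (1 + de n) - hm n <= 1 - q n <= be n * (1 + de n) by near: n.
  apply/andP; split.
    rewrite ler_pdivlMr //.
    have -> : (1 + de n - hb n) * be n = be n * (1 + de n) - be n * hb n.
      by rewrite mulrBl mulrC (mulrC (hb n)).
    lra.
  rewrite ler_pdivrMr //.
  have -> : (1 + de n + al n / be n) * be n = be n * (1 + de n) + al n.
    by field; rewrite gt_eqF.
  lra.
have HcU : (fun n => 1 - q n - al n) @ \oo --> (0:R).
  apply: (cvg_near_eq _ (fun n => be n * ((1 - q n - al n) / be n))).
    near=> n; have Hb : 0 < be n by near: n.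
    by rewrite mulrC divfK // gt_eqF.
  have := cvgM Hbe HrU; rewrite mul0r => H; exact: H.
have HkcU : (fun n => (k n)%:R * (1 - q n - al n)) @ \oo --> t.
  apply: (cvg_near_eq _ (fun n => (k n)%:R * be n * ((1 - q n - al n) / be n))).
    near=> n; have Hb : 0 < be n by near: n.
    by rewrite -mulrA (mulrC (be n)) divfK // gt_eqF.
  have := cvgM Hkbe HrU; rewrite mulr1 => H; exact: H.
have HcL : (fun n => 1 - q n + al n) @ \oo --> (0:R).
  apply: (cvg_near_eq _ (fun n => be n * ((1 - q n + al n) / be n))).
    near=> n; have Hb : 0 < be n by near: n.
    by rewrite mulrC divfK // gt_eqF.
  have := cvgM Hbe HrL; rewrite mul0r => H; exact: H.
have HkcL : (fun n => (k n).+1%:R * (1 - q n + al n)) @ \oo --> t.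
  apply: (cvg_near_eq _ (fun n => (k n)%:R * be n * ((1 - q n + al n) / be n)
                                     + (1 - q n + al n))).
    near=> n; have Hb : 0 < be n by near: n.
    by rewrite -mulrA (mulrC (be n)) divfK ?gt_eqF // mulrSr mulrDl mul1r.
  have := cvgD (cvgM Hkbe HrL) HcL; rewrite mulr1 addr0 => H; exact: H.
have Hkhm : (fun n => (k n).+1%:R * hm n) @ \oo --> (0:R).
  apply: (cvg_near_eq _ (fun n => (k n)%:R * be n * hb n + be n * hb n)).
    near=> n; have -> : hm n = be n * hb n by near: n.
    by rewrite mulrSr mulrDl mul1r mulrA.
  have := cvgD (cvgM Hkbe Hhb) (cvgM Hbe Hhb); rewrite mulr0 mul0r addr0 => H; exact: H.
have HUl := pow_exp_lim (fun n => 1 - q n - al n) k t HcU HkcU.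
have HLl := pow_exp_lim (fun n => 1 - q n + al n) (fun n => (k n).+1) t HcL HkcL.
have HLl' : (fun n => (1 - (1 - q n + al n)) ^+ (k n).+1 - (k n).+1%:R * hm n)
            @ \oo --> expR (- t).
  have := cvgB HLl Hkhm; rewrite subr0 => H; exact: H.
apply: (squeeze_cvgr _ HLl' HUl); near=> n.
have HcLn : 1 - q n + al n <= 1.
  near: n; move/cvgrPdist_le: HcL => /(_ 1 ltr01); apply: filterS => n.
  by rewrite sub0r normrN => /(le_trans (ler_norm _)).
have E1 : 1 - (1 - q n + al n) = q n - al n by lra.
have E2 : 1 - (1 - q n - al n) = q n + al n by lra.
rewrite E1 E2; apply/andP; split.
  have H : 0 <= q n - al n -> (q n - al n) ^+ (k n).+1 - (k n).+1%:R * hm n <= Fs n by near: n.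
  by apply: H; lra.
by near: n.
Unshelve. all: by end_near.
Qed.

End Lim.

End P6.
Import P6.

Local Open Scope classical_set_scope.
Local Open Scope ring_scope.

Theorem mainTheorem1 (R : realType) (S : nat -> finType)
  (P : forall n, S n -> S n -> R) (pi : forall n, S n -> R)
  (A : forall n, {set S n}) (x : forall n, S n) (b h r : nat -> nat) :
  (forall n, stochastic (P n)) ->
  (forall n, irreducible (P n)) ->
  (forall n, stationary (P n) (pi n)) ->
  (forall n, A n != finset.set0) ->
  (fun n => \sum_(y in A n) pi n y) @ \oo --> (0 : R) ->
  (fun n => mu (P n) (pi n) (A n)) @ \oo --> (0 : R) ->
  (forall M : nat, \forall n \near \oo, (M <= b n)%N) ->
  (forall M : nat, \forall n \near \oo, (M <= h n)%N) ->
  (forall M : nat, \forall n \near \oo, (M <= r n)%N) ->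
  (fun n => (h n)%:R / (b n)%:R) @ \oo --> (0 : R) ->
  (fun n => (b n)%:R * mu (P n) (pi n) (A n)) @ \oo --> (0 : R) ->
  (forall eps : R, 0 < eps -> \forall n \near \oo,
      alpha (P n) (pi n) (h n) <= eps * ((b n)%:R * mu (P n) (pi n) (A n))) ->
  (* (M1) *)
  (exists delta : nat -> R, delta @ \oo --> (0 : R) /\
     \forall n \near \oo,
       Pr (P n) (pi n) (b n) (Npos (A n) (b n))
       = (b n)%:R * mu (P n) (pi n) (A n) * (1 + delta n)) ->
  (* (M2) *)
  (fun n => Pr (P n) (pt_law (x n)) (r n) (hit_by (A n) (r n))) @ \oo --> (0 : R) ->
  (fun n => dTV (Ppow (P n) (r n) (x n)) (pi n)) @ \oo --> (0 : R) ->
  (fun n => (r n)%:R * mu (P n) (pi n) (A n)) @ \oo --> (0 : R) ->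
  (* conclusion: P_{x_n}(mu_n T_{A_n} <= t) -> 1 - exp(-t) for every t >= 0 *)
  forall t : R, 0 <= t ->
    (fun n => Pr (P n) (pt_law (x n))
                 (Num.truncn (t / mu (P n) (pi n) (A n)))
                 (scaled_hit_le (A n) (mu (P n) (pi n) (A n)) t
                    (Num.truncn (t / mu (P n) (pi n) (A n)))))
      @ \oo --> (1 - expR (- t)).
Proof.
move=> HP Hirr Hpi HA HpiA Hmu Hb Hh Hr Hhb Hbmu Halpha [delta [Hdelta HM1]]
  Hhit Hdtv Hrmu t Ht.
have Hmu0 : \forall n \near \oo, 0 < mu (P n) (pi n) (A n).
  move/cvgrPdist_lt: HpiA => /(_ 1 ltr01); apply: filterS => n Hn.
  apply: (muc_gt0 (P n) (pi n) (A n) (HP n) (Hpi n) (Hirr n) (HA n)).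
  by move: Hn; rewrite sub0r normrN => /(le_lt_trans (ler_norm _)).
have Hb1 := Hb 1%N.
have Hhleb : \forall n \near \oo, (h n <= b n)%N.
  have H := Hhb; move/cvgrPdist_lt: H => /(_ 1 ltr01) H.
  apply: (filterS2 _ _ H Hb1) => n Hn Hbn.
  move: Hn; rewrite sub0r normrN ger0_norm; last by rewrite divr_ge0.
  rewrite ltr_pdivrMr; last by rewrite ltr0n.
  by rewrite mul1r ltr_nat => /ltnW.
have HFs : (fun n => F (P n) (pi n) (A n) (Num.truncn (t / mu (P n) (pi n) (A n))))
            @ \oo --> expR (- t).
  apply: (block_analytic t _ (fun n => F (P n) (pi n) (A n) (b n - h n))
    (fun n => alpha (P n) (pi n) (h n)) (fun n => (b n)%:R * mu (P n) (pi n) (A n))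
    delta (fun n => (h n)%:R / (b n)%:R) (fun n => (h n)%:R * mu (P n) (pi n) (A n))
    (fun n => (Num.truncn (t / mu (P n) (pi n) (A n)) %/ b n)%N)).
  - exact: Hbmu.
  - near=> n; have Hbn : (1 <= b n)%N by near: n.
    have Hm : 0 < mu (P n) (pi n) (A n) by near: n.
    by rewrite mulr_gt0 // ltr0n.
  - have Hlo : (fun n => t - (b n)%:R * mu (P n) (pi n) (A n)) @ \oo --> t.
      have := cvgB (cvg_cst t) Hbmu; rewrite subr0 => H; exact: H.
    apply: (squeeze_cvgr _ Hlo (cvg_cst t)); near=> n.
    have Hbn : (0 < b n)%N by near: n.
    have Hm : 0 < mu (P n) (pi n) (A n) by near: n.
    move: Hm; set m := mu (P n) (pi n) (A n); set sn := Num.truncn (t / m);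
      set bn := b n => Hm.
    have Hs1 : sn%:R <= t / m by rewrite /sn truncn_le divr_ge0 // ltW.
    have Hs2 : t / m < sn.+1%:R by rewrite -truncn_le_nat.
    rewrite ler_pdivlMr // in Hs1; rewrite ltr_pdivrMr // in Hs2.
    have A1 : ((sn %/ bn * bn)%N%:R * m <= sn%:R * m).
      by rewrite ler_pM2r // ler_nat leq_divM.
    have A4 : (sn.+1%:R * m <= ((sn %/ bn).+1 * bn)%N%:R * m).
      by rewrite ler_pM2r // ler_nat ltn_ceil.
    rewrite mulSnr natrD !natrM in A4; rewrite natrM in A1.
    apply/andP; split; lra.
  - exact: Hdelta.
  - exact: Hhb.
  - near=> n; have Hbn : (0 < b n)%N by near: n.
    by field; rewrite pnatr_eq0 -lt0n.
  - by near=> n; apply: alpha_ge0.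
  - exact: Halpha.
  - near=> n.
    have Hhn : (h n <= b n)%N by near: n.
    have HM : Pr (P n) (pi n) (b n) (Npos (A n) (b n))
       = (b n)%:R * mu (P n) (pi n) (A n) * (1 + delta n) by near: n.
    rewrite (Pr_Npos _ _ _ (HP n) (Hpi n)) in HM.
    have {}HM : (b n)%:R * mu (P n) (pi n) (A n) * (1 + delta n) = 1 - F (P n) (pi n) (A n) (b n) by [].
    have H1 := F_mono (P n) (pi n) (A n) (HP n) (Hpi n) _ _ (leq_subr (h n) (b n)).
    have H2 := F_diff (P n) (pi n) (A n) (HP n) (Hpi n) (b n - h n) (h n).
    rewrite subnK // /muc in H2.
    rewrite /= HM; apply/andP; split; lra.
  - near=> n; have Hhn : (h n <= b n)%N by near: n.
    apply: le_trans (F_kb_upper (P n) (pi n) (A n) (HP n) (Hpi n) (b n) (h n) _ Hhn).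
    exact: F_mono (P n) (pi n) (A n) (HP n) (Hpi n) _ _ (leq_divM _ _).
  - near=> n; have Hhn : (h n <= b n)%N by near: n.
    have Hbn : (0 < b n)%N by near: n.
    move=> Hq0.
    apply: le_trans (F_kb_lower (P n) (pi n) (A n) (HP n) (Hpi n) (b n) (h n) _ Hhn Hq0) _.
    exact: F_mono (P n) (pi n) (A n) (HP n) (Hpi n) _ _ (ltnW (ltn_ceil _ Hbn)).
have HGF : (fun n => G (P n) (A n) (x n) (Num.truncn (t / mu (P n) (pi n) (A n)))
                 - F (P n) (pi n) (A n) (Num.truncn (t / mu (P n) (pi n) (A n))))
            @ \oo --> (0:R).
  have H1 : (fun n => 1 - G (P n) (A n) (x n) (r n)) @ \oo --> (0:R).
    apply: (cvg_near_eq _ _ _ _ Hhit); near=> n.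
    by rewrite (Pr_hit (P n) (A n) (HP n)).
  have He : (fun n => (1 - G (P n) (A n) (x n) (r n)) + dTV (Ppow (P n) (r n) (x n)) (pi n)
                + (r n)%:R * mu (P n) (pi n) (A n)) @ \oo --> (0:R).
    have := cvgD (cvgD H1 Hdtv) Hrmu; rewrite !addr0 => H; exact: H.
  have HeN : (fun n => - ((1 - G (P n) (A n) (x n) (r n)) + dTV (Ppow (P n) (r n) (x n)) (pi n)
                + (r n)%:R * mu (P n) (pi n) (A n))) @ \oo --> (0:R).
    have := cvgN He; rewrite oppr0 => H; exact: H.
  apply: (squeeze_cvgr _ HeN He); near=> n.
  have := G_F (P n) (pi n) (A n) (HP n) (Hpi n) (x n) (r n)
            (Num.truncn (t / mu (P n) (pi n) (A n))).
  rewrite ler_norml /muc => /andP[Ha Hb'].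
  by apply/andP; split.
have Hfin : (fun n => (1 - F (P n) (pi n) (A n) (Num.truncn (t / mu (P n) (pi n) (A n))))
   - (G (P n) (A n) (x n) (Num.truncn (t / mu (P n) (pi n) (A n)))
                 - F (P n) (pi n) (A n) (Num.truncn (t / mu (P n) (pi n) (A n)))))
   @ \oo --> 1 - expR (- t).
  have := cvgB (cvgB (cvg_cst (1:R)) HFs) HGF; rewrite subr0 => H; exact: H.
apply: (cvg_near_eq _ _ _ _ Hfin); near=> n.
have Hm : 0 < mu (P n) (pi n) (A n) by near: n.
rewrite /=.
transitivity (Pr (P n) (pt_law (x n)) (Num.truncn (t / mu (P n) (pi n) (A n)))
               (hit_by (A n) (Num.truncn (t / mu (P n) (pi n) (A n))))).
  rewrite /Pr; apply: eq_bigl => w; rewrite /scaled_hit_le /hit_by /=.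
  apply: eq_existsb => i; case: (w i \in A n) => //=.
  apply: (@le_trans _ _ (mu (P n) (pi n) (A n) * (Num.truncn (t / mu (P n) (pi n) (A n)))%:R)).
    by rewrite ler_pM2l // ler_nat -ltnS ltn_ord.
  by rewrite -ler_pdivlMl // [_^-1 * _]mulrC truncn_le divr_ge0 // ltW.
rewrite (Pr_hit (P n) (A n) (HP n)); ring.
Unshelve. all: by end_near.
Qed.
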